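(* For every tournament $X$ on $n$ vertices, the Redei–Berge polynomial satisfies $u_X(-m)=(-1)^n u_X(m)$.
   Context: A tournament is a digraph $X=(V,E)$ ($V$ finite, $E\subset\{(u,v)\in V\times V\mid u\ne v\}$) such that for any two distinct vertices $u,v$ exactly one of $(u,v),(v,u)$ lies in $E$. $\Sigma_V$ is the set of bijections $\sigma:[n]\to V$, $X\mathrm{Des}(\sigma)=\{i\in[n-1]\mid(\sigma_i,\sigma_{i+1})\in E\}$; $F_I=\sum x_{i_1}\cdots x_{i_n}$ over $1\le i_1\le\cdots\le i_n$ with $i_j<i_{j+1}$ for $j\in I$; $U_X=\sum_{\sigma\in\Sigma_V}F_{X\mathrm{Des}(\sigma)}$; $u_X(m)$ is the polynomial in $m$ given by $U_X(1,\dots,1,0,\dots)$ with $m$ ones. *)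

(* Defs.v *)
From mathcomp Require Import all_boot all_order all_algebra.
Set Implicit Arguments. Unset Strict Implicit. Unset Printing Implicit Defensive.
Import GRing.Theory Num.Theory.

Definition is_tournament (V : finType) (E : rel V) : Prop :=
  (forall u, ~~ E u u) /\ (forall u v, u != v -> E u v (+) E v u).

(* Positions are 0-based: position j (j+1 < n) sits between sigma_j and
   sigma_{j+1}; it corresponds to the paper's i = j+1 in [n-1]. *)
Definition XDes (V : finType) (E : rel V) (n : nat) (sigma : {ffun 'I_n -> V})
  : pred nat :=
  fun j => [exists a : 'I_n, exists b : 'I_n,
             [&& nat_of_ord a == j, nat_of_ord b == j.+1 & E (sigma a) (sigma b)]].

(* F_I(1,...,1,0,...) with m ones = number of sequences
   1 <= i_1 <= ... <= i_n <= m (here values in 'I_m) with strict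
   increase at the positions in I. *)
Definition F1 (n m : nat) (I : pred nat) : nat :=
  #|[set s : {ffun 'I_n -> 'I_m} |
      [forall a : 'I_n, forall b : 'I_n,
         (nat_of_ord b == (nat_of_ord a).+1) ==>
           (if I a then s a < s b else s a <= s b)]]|.

(* U_X(1^m): sum over bijections sigma : [n] -> V (n = #|V|). *)
Definition U1 (V : finType) (E : rel V) (m : nat) : nat :=
  \sum_(sigma : {ffun 'I_#|V| -> V} | injectiveb sigma) F1 #|V| m (XDes E sigma).

(* Main.v *)
Require Import Defs.
From mathcomp Require Import all_boot all_order all_algebra zify ring.
Import GRing.Theory Num.Theory.
Set Implicit Arguments. Unset Strict Implicit. Unset Printing Implicit Defensive.

Definition cnt (I : pred nat) k := count (predC I) (iota 0 k).

Lemma cntS I k : cnt I k.+1 = cnt I k + (if I k then 0 else 1).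
Proof. by rewrite /cnt -addn1 iotaD count_cat /= add0n; case: (I k). Qed.

Lemma cnt_add I k j : cnt I k <= cnt I (k + j) <= cnt I k + j.
Proof.
rewrite /cnt iotaD count_cat leq_addr leq_add2l.
by have := count_size (predC I) (iota (0+k) j); rewrite size_iota.
Qed.

Lemma cnt_le I k : cnt I k <= k.
Proof. by rewrite /cnt (leq_trans (count_size _ _)) ?size_iota. Qed.

Lemma incr_nat (g : nat -> nat) n : (forall k, k.+1 < n -> g k < g k.+1) ->
  forall k j, k + j < n -> g k + j <= g (k + j).
Proof.
move=> H k; elim=> [|j IH] hkj; first by rewrite !addn0.
have e1 : k + j < n by clear -hkj; lia.
have e2 : (k + j).+1 < n by clear -hkj; lia.
have h1 := IH e1.
have h2 := H (k + j) e2.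
rewrite !addnS; clear -h1 h2; lia.
Qed.

Lemma nth_enum_map n (g : 'I_n -> nat) k (hk : k < n) :
  nth 0 (map g (enum 'I_n)) k = g (Ordinal hk).
Proof.
rewrite (@nth_map _ (Ordinal hk) _ 0 g k (enum 'I_n)); last by rewrite size_enum_ord.
by rewrite (nth_ord_enum (Ordinal hk) (Ordinal hk)).
Qed.

Lemma sorted_enumP n (g : 'I_n -> nat) (r : rel nat) :
  sorted r (map g (enum 'I_n)) =
  [forall a, forall b, (nat_of_ord b == (nat_of_ord a).+1) ==> r (g a) (g b)].
Proof.
apply/(sortedP 0)/forallP; rewrite size_map size_enum_ord.
- move=> H a; apply/forallP => b; apply/implyP => /eqP hb.
  have hlt : a.+1 < n by rewrite -hb.
  have := H a hlt.
  rewrite (nth_enum_map g (ltn_ord a)) (nth_enum_map g hlt).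
  have -> : Ordinal (ltn_ord a) = a by apply: val_inj.
  by have -> : Ordinal hlt = b by apply: val_inj.
- move=> H k hk.
  have hk0 : k < n by apply: ltnW.
  rewrite (nth_enum_map g hk0) (nth_enum_map g hk).
  by have := forallP (H (Ordinal hk0)) (Ordinal hk); rewrite /= eqxx.
Qed.

Lemma strict_card n N : F1 n N (fun _ => true) = 'C(N, n).
Proof.
rewrite /F1 -card_ltn_sorted_tuples.
pose ft (f : {ffun 'I_n -> 'I_N}) : n.-tuple 'I_N := [tuple f i | i < n].
have ftinj : injective ft.
  by move=> f g E; apply/ffunP => i; rewrite -(tnth_mktuple f i) -(tnth_mktuple g i) -/(ft f) E.
have key f : sorted ltn (map val (ft f)) =
   [forall a, forall b, (nat_of_ord b == (nat_of_ord a).+1) ==> (f a < f b)].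
  rewrite -(sorted_enumP (fun i => val (f i)) ltn); congr sorted.
  by rewrite /= -map_comp.
rewrite -(card_imset _ ftinj); apply: eq_card => t.
rewrite inE; apply/imsetP/idP.
- by case=> f; rewrite inE => Hf ->; rewrite key.
- move=> Ht.
  have ftK : ft [ffun i => tnth t i] = t.
    by apply: eq_from_tnth => i; rewrite tnth_mktuple ffunE.
  by exists [ffun i => tnth t i]; rewrite // inE -key ftK.
Qed.

Lemma step2 n' M' I :
  F1 n'.+1 M'.+1 I = F1 n'.+1 (M' + cnt I n').+1 (fun _ => true).
Proof.
rewrite /F1.
set C := cnt I n'.
set A := (X in #|X| = _). set B := (X in _ = #|X|).
pose phi (s : {ffun 'I_n'.+1 -> 'I_M'.+1}) : {ffun 'I_n'.+1 -> 'I_(M'+C).+1} :=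
  [ffun i => inord (s i + cnt I i)].
pose psi (t : {ffun 'I_n'.+1 -> 'I_(M'+C).+1}) : {ffun 'I_n'.+1 -> 'I_M'.+1} :=
  [ffun i => inord (t i - cnt I i)].
have ciC (i : 'I_n'.+1) : cnt I i <= C /\ C <= cnt I i + (n' - i).
  have hi : i <= n' by rewrite -ltnS.
  by have := cnt_add I i (n' - i); rewrite subnKC // => /andP[].
have bnd (s : {ffun 'I_n'.+1 -> 'I_M'.+1}) (i : 'I_n'.+1) : s i + cnt I i < (M'+C).+1.
  have [h1 _] := ciC i; have h2 := ltn_ord (s i); clear -h1 h2; lia.
have phiK : cancel phi psi.
  move=> s; apply/ffunP => i; rewrite !ffunE; apply/val_inj => /=.
  rewrite (inordK (bnd s i)) addnK inordK //.
have AB : [set phi s | s in A] \subset B.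
  apply/subsetP => _ /imsetP [s sA ->]; rewrite inE in sA; rewrite inE.
  apply/forallP => a; apply/forallP => b; apply/implyP => /eqP hb.
  have := forallP (forallP sA a) b; rewrite hb eqxx /= !ffunE.
  rewrite (inordK (bnd s a)) (inordK (bnd s b)) hb cntS.
  by case: (I a) => h; clear -h; lia.
have tfacts t : t \in B -> forall i : 'I_n'.+1, i <= t i /\ t i + (n' - i) <= M' + C.
  move=> tB i; rewrite inE in tB.
  pose g k := val (t (inord k)).
  have Hg k : k.+1 < n'.+1 -> g k < g k.+1.
    move=> hk; have := forallP (forallP tB (inord k)) (inord k.+1).
    by rewrite !inordK // ?eqxx //; apply: ltnW.
  have hi : i <= n' by rewrite -ltnS.
  have h1 := incr_nat Hg (k:=0) (j:=i) (ltac:(by rewrite add0n)).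
  have h2 := incr_nat Hg (k:=i) (j:=n' - i) (ltac:(by rewrite subnKC)).
  rewrite subnKC // in h2.
  have h3 : g n' <= M' + C by rewrite -ltnS /g ltn_ord.
  rewrite add0n /g inord_val in h1; rewrite /g inord_val in h2.
  rewrite /g in h3; rewrite /= in h1 h2 h3; set x := t i in h1 h2 *; clear -h1 h2 h3; lia.
have psiK : {in B, cancel psi phi}.
  move=> t tB; apply/ffunP => i; rewrite !ffunE; apply/val_inj => /=.
  have [h1 h2] := tfacts t tB i; have [h3 h4] := ciC i; have h5 := cnt_le I i.
  have h6 := ltn_ord (t i).
  set x := t i in h1 h2 h6 *.
  rewrite (@inordK M' (x - cnt I i)); last by clear -h1 h2 h3 h4 h5; lia.
  rewrite inordK; clear -h1 h2 h3 h4 h5 h6; lia.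
have BA : [set psi t | t in B] \subset A.
  apply/subsetP => _ /imsetP [t tB ->]; rewrite inE.
  apply/forallP => a; apply/forallP => b; apply/implyP => /eqP hb.
  have tB' := tB; rewrite inE in tB'.
  have := forallP (forallP tB' a) b; rewrite hb eqxx /= !ffunE => hab.
  have [h1 h2] := tfacts t tB a; have [h3 h4] := ciC a; have h5 := cnt_le I a.
  have [h1' h2'] := tfacts t tB b; have [h3' h4'] := ciC b; have h5' := cnt_le I b.
  set x := t a in h1 h2 hab *; set y := t b in h1' h2' hab *.
  rewrite inordK; last by clear -h1 h2 h3 h4 h5; lia.
  rewrite inordK; last by clear -h1' h2' h3' h4' h5'; lia.
  rewrite hb cntS; case: (I a) => //=; clear -hab h5 h1; lia.
apply/eqP; rewrite eqn_leq; apply/andP; split.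
  by rewrite -(card_imset A (can_inj phiK)); apply: subset_leq_card AB.
by rewrite -(card_in_imset (can_in_inj psiK)); apply: subset_leq_card BA.
Qed.

Lemma F1_formula n m I : F1 n m I = 'C(m + cnt I n.-1, n).
Proof.
case: n => [|n'].
  rewrite bin0 /F1 (_ : [set s | _] = setT); last first.
    by apply/setP => s; rewrite !inE; apply/forallP => -[].
  by rewrite cardsT card_ffun !card_ord expn0.
case: m => [|M'].
  rewrite bin_small; last by rewrite add0n ltnS cnt_le.
  apply/eqP; rewrite -leqn0 (leq_trans (max_card _)) //.
  by rewrite card_ffun !card_ord exp0n.
by rewrite (step2 n' M' I) strict_card addSn.
Qed.

Local Open Scope ring_scope.

Definition Qp (n k : nat) : {poly rat} :=
  (n`!%:R)^-1 *: \prod_(i < n) ('X + (k%:R - i%:R)%:P).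

Lemma Qp_eval n k x : (Qp n k).[x] = (n`!%:R)^-1 * \prod_(i < n) (x + (k%:R - i%:R)).
Proof.
rewrite /Qp hornerZ horner_prod; congr (_ * _); apply: eq_bigr => i _.
by rewrite hornerD hornerX hornerC.
Qed.

Lemma ffact_rat (N n : nat) : ((N ^_ n)%:R : rat) = \prod_(i < n) (N%:R - i%:R).
Proof.
elim: n => [|n IH]; first by rewrite ffactn0 big_ord0.
rewrite ffactnSr big_ord_recr /= natrM IH.
case: (leqP n N) => h; first by rewrite natrB.
by rewrite -IH ffact_small // !mul0r.
Qed.

Lemma Qp_nat n k (m : nat) : (Qp n k).[m%:R] = ('C(m + k, n))%:R.
Proof.
rewrite Qp_eval (eq_bigr (fun i : 'I_n => (m + k)%:R - i%:R)); last first.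
  by move=> i _; rewrite natrD addrA.
rewrite -ffact_rat -bin_ffact natrM mulrCA mulVf ?mulr1 //.
by rewrite pnatr_eq0 -lt0n fact_gt0.
Qed.

Lemma prodN_ord n (F : nat -> rat) :
  \prod_(i < n) - F i = (-1) ^+ n * \prod_(i < n) F i.
Proof.
elim: n => [|n IH]; first by rewrite !big_ord0 expr0 mulr1.
by rewrite !big_ord_recr /= IH exprSr; ring.
Qed.

Lemma Qp_recip n k x : (k <= n.-1)%N ->
  (Qp n k).[-x] = (-1) ^+ n * (Qp n (n.-1 - k)).[x].
Proof.
move=> hk; rewrite !Qp_eval mulrCA; congr (_ * _).
case: n hk => [|n] hk; first by rewrite !big_ord0 expr0 mulr1.
rewrite [in RHS](reindex_inj rev_ord_inj) /=.
rewrite (eq_bigr (fun i : 'I_n.+1 => - (x + ((n - k)%:R - (n - i)%:R)))); last first.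
  move=> i _; rewrite natrB // natrB; last by rewrite -ltnS.
  ring.
rewrite (prodN_ord n.+1 (fun j => x + ((n - k)%:R - (n - j)%:R))).
by [] || (congr (_ * _); apply: eq_bigr => i _; rewrite subSS).
Qed.

Lemma rev_iota0 k : rev (iota 0 k) = map (fun j => k.-1 - j)%N (iota 0 k).
Proof.
elim: k => [|k IH] //.
rewrite [in LHS](_ : iota 0 k.+1 = iota 0 k ++ [:: k]); last by rewrite -addn1 iotaD.
rewrite rev_cat IH /= subn0; congr (_ :: _).
rewrite (iotaDl 1 0 k) -map_comp; apply: eq_map => j /=.
by clear; lia.
Qed.

Definition revf (V : finType) n (s : {ffun 'I_n -> V}) : {ffun 'I_n -> V} :=
  [ffun i => s (rev_ord i)].

Lemma revfK (V : finType) n : cancel (@revf V n) (@revf V n).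
Proof. by move=> s; apply/ffunP => i; rewrite !ffunE rev_ordK. Qed.

Lemma revf_inj (V : finType) n (s : {ffun 'I_n -> V}) :
  injectiveb (revf s) = injectiveb s.
Proof.
apply/injectiveP/injectiveP => H i j.
  move=> e; apply: rev_ord_inj; apply: H; by rewrite !ffunE !rev_ordK.
by rewrite !ffunE => /H /rev_ord_inj.
Qed.

Lemma XDes_at (V : finType) (E : rel V) n (s : {ffun 'I_n -> V}) (a b : 'I_n) :
  nat_of_ord b = (nat_of_ord a).+1 -> XDes E s a = E (s a) (s b).
Proof.
move=> hb; rewrite /XDes; apply/existsP/idP.
  case=> a' /existsP [b' /and3P [/eqP ha /eqP hb' he]].
  have -> : a = a' by apply: val_inj; rewrite /= ha.
  by have -> : b = b' by apply: val_inj; rewrite /= hb' hb.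
by move=> he; exists a; apply/existsP; exists b; rewrite eqxx hb eqxx he.
Qed.

Lemma cnt_rev (V : finType) (E : rel V) n (s : {ffun 'I_n -> V}) :
  is_tournament E -> injective s ->
  cnt (XDes E (revf s)) n.-1 = (n.-1 - cnt (XDes E s) n.-1)%N.
Proof.
case=> _ tour sinj.
have pt j : (j < n.-1)%N -> predC (XDes E (revf s)) j = XDes E s (n.-1.-1 - j)%N.
  move=> hj.
  have ha : (j < n)%N by clear -hj; lia.
  have hb : (j.+1 < n)%N by clear -hj; lia.
  have ha' : (n - j.+2 < n)%N by clear -hj; lia.
  have hb' : (n - j.+1 < n)%N by clear -hj; lia.
  rewrite /= (XDes_at E (revf s) (a := Ordinal ha) (b := Ordinal hb)) //.
  have -> : (n.-1.-1 - j)%N = Ordinal ha' by rewrite /=; clear -hj; lia.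
  rewrite (XDes_at E s (a := Ordinal ha') (b := Ordinal hb')) /=; last by clear -hj; lia.
  rewrite !ffunE.
  have -> : rev_ord (Ordinal ha) = Ordinal hb' by apply: val_inj.
  have -> : rev_ord (Ordinal hb) = Ordinal ha' by apply: val_inj.
  have neq : s (Ordinal hb') != s (Ordinal ha').
    apply/negP => /eqP /sinj /(congr1 val) /=; clear -hj; lia.
  by have := tour _ _ neq; case: (E _ _); case: (E _ _).
rewrite /cnt (eq_in_count (a2 := fun j => XDes E s (n.-1.-1 - j)%N)); last first.
  by move=> j; rewrite mem_iota add0n => /pt.
rewrite -(count_map (fun j => n.-1.-1 - j)%N) -rev_iota0 count_rev.
have := count_predC (XDes E s) (iota 0 n.-1); rewrite size_iota => h.
rewrite -/(cnt _ _) in h *; set u := count _ _ in h *; clear -h; lia.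
Qed.

Unset Implicit Arguments.

Theorem mainTheorem18 (V : finType) (E : rel V) :
  is_tournament E ->
  exists p : {poly rat},
    (forall m : nat, p.[m%:R] = (U1 E m)%:R) /\
    (forall x : rat, p.[- x] = (-1) ^+ #|V| * p.[x]).
Proof.
move=> tE.
pose d (s : {ffun 'I_#|V| -> V}) := cnt (XDes E s) #|V|.-1.
exists (\sum_(s : {ffun 'I_#|V| -> V} | injectiveb s) Qp #|V| (d s)); split.
- move=> m; rewrite horner_sum /U1 natr_sum; apply: eq_bigr => s _.
  by rewrite Qp_nat F1_formula.
- move=> x; rewrite !horner_sum mulr_sumr.
  rewrite (eq_bigr (fun s => (-1) ^+ #|V| * (Qp #|V| (#|V|.-1 - d s)).[x])); last first.
    by move=> s _; rewrite Qp_recip // cnt_le.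
  rewrite (reindex_inj (can_inj (@revfK V #|V|))) /=.
  apply: eq_big => s; first by rewrite revf_inj.
  move=> hs; have sinj : injective s by apply/injectiveP; rewrite -revf_inj.
  by rewrite /d cnt_rev // ssrnat.subKn // cnt_le.
Qed.
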